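(* Consecutive reflection points of $\mathrm{OPT}$ (in its orientation) alternate between left reflection points and right reflection points.
   Context: Instance: vertical line segments $s_1,\dots,s_n$ in $\mathbb{R}^2$, each of length $1$, with pairwise distinct $x$-coordinates. A tour is a cyclic sequence of points $p_1,\dots,p_\sigma$, each on some segment, with every segment containing at least one $p_j$; the straight segments joining consecutive points are legs. $\mathrm{OPT}$ is a fixed minimum-cost tour, oriented, with no two consecutive points on the same segment (no vertical legs) and not self-crossing. A point $p_j$ of $\mathrm{OPT}$ on segment $s$ is a left (resp. right) reflection point if both incident legs lie in $x\le x(s)$ (resp. $x\ge x(s)$). *)

(* Defs.v *)
From Stdlib Require Import Reals List Arith Lra.
Open Scope R_scope.

Definition point := (R * R)%type.

Definition on_seg (sx sy : nat -> R) (i : nat) (p : point) : Prop :=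
  fst p = sx i /\ sy i <= snd p <= sy i + 1.

Definition distinct_x (n : nat) (sx : nat -> R) : Prop :=
  forall i j, (i < n)%nat -> (j < n)%nat -> i <> j -> sx i <> sx j.

Definition pt (T : list point) (j : nat) : point :=
  nth (j mod length T) T (0, 0).

Definition is_tour (n : nat) (sx sy : nat -> R) (T : list point) : Prop :=
  T <> nil /\
  (forall p, In p T -> exists i, (i < n)%nat /\ on_seg sx sy i p) /\
  (forall i, (i < n)%nat -> exists p, In p T /\ on_seg sx sy i p).

Definition dist (p q : point) : R :=
  sqrt ((fst p - fst q) ^ 2 + (snd p - snd q) ^ 2).

Definition cost (T : list point) : R :=
  fold_right Rplus 0 (map (fun j => dist (pt T j) (pt T (S j))) (seq 0 (length T))).

Definition no_consec_same_seg (n : nat) (sx sy : nat -> R) (T : list point) : Prop :=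
  forall j i, (j < length T)%nat -> (i < n)%nat ->
    ~ (on_seg sx sy i (pt T j) /\ on_seg sx sy i (pt T (S j))).

Definition orient (a b c : point) : R :=
  (fst b - fst a) * (snd c - snd a) - (snd b - snd a) * (fst c - fst a).

Definition proper_cross (a b c d : point) : Prop :=
  orient a b c * orient a b d < 0 /\ orient c d a * orient c d b < 0.

Definition not_self_crossing (T : list point) : Prop :=
  forall j k, (j < length T)%nat -> (k < length T)%nat -> j <> k ->
    ~ proper_cross (pt T j) (pt T (S j)) (pt T k) (pt T (S k)).

Definition min_cost_tour (n : nat) (sx sy : nat -> R) (T : list point) : Prop :=
  is_tour n sx sy T /\ forall T', is_tour n sx sy T' -> cost T <= cost T'.

(* p_j on segment s is a left reflection point if both incident legs
   (p_{j-1} p_j and p_j p_{j+1}) lie in x <= x(s); right: x >= x(s).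
   p_{j-1} is pt T (j + length T - 1). *)
Definition left_refl (n : nat) (sx sy : nat -> R) (T : list point) (j : nat) : Prop :=
  exists i, (i < n)%nat /\ on_seg sx sy i (pt T j) /\
    fst (pt T (j + length T - 1)) <= sx i /\ fst (pt T j) <= sx i /\
    fst (pt T (S j)) <= sx i.

Definition right_refl (n : nat) (sx sy : nat -> R) (T : list point) (j : nat) : Prop :=
  exists i, (i < n)%nat /\ on_seg sx sy i (pt T j) /\
    sx i <= fst (pt T (j + length T - 1)) /\ sx i <= fst (pt T j) /\
    sx i <= fst (pt T (S j)).

Definition refl (n : nat) (sx sy : nat -> R) (T : list point) (j : nat) : Prop :=
  left_refl n sx sy T j \/ right_refl n sx sy T j.

(* Main.v *)
Require Import Defs.
From Stdlib Require Import Reals List Arith.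
From Stdlib Require Import Lia Lra.
Open Scope R_scope.

Lemma pt_mod (T : list point) k : pt T (k mod length T) = pt T k.
Proof. unfold pt. now rewrite Nat.Div0.mod_mod. Qed.

Lemma pt_S_mod (T : list point) k : pt T (S (k mod length T)) = pt T (S k).
Proof.
  unfold pt. f_equal. replace (S (k mod length T)) with (1 + k mod length T)%nat by lia.
  rewrite Nat.Div0.add_mod_idemp_r. f_equal.
Qed.

Lemma pt_per (T : list point) k : pt T (k + length T) = pt T k.
Proof.
  unfold pt. f_equal. replace (k + length T)%nat with (k + 1 * length T)%nat by lia.
  apply Nat.Div0.mod_add.
Qed.

Lemma pt_in (n : nat) sx sy T k : is_tour n sx sy T ->
  exists i, (i < n)%nat /\ on_seg sx sy i (pt T k).
Proof.
  intros [Hne [Hin _]]. apply Hin. unfold pt. apply nth_In.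
  apply Nat.mod_upper_bound. destruct T; simpl; [congruence|lia].
Qed.

Lemma x_neq n sx sy T k : distinct_x n sx -> is_tour n sx sy T ->
  no_consec_same_seg n sx sy T -> fst (pt T k) <> fst (pt T (S k)).
Proof.
  intros Hd Ht Hnc Heq.
  destruct (pt_in n sx sy T k Ht) as [i [Hi Hon]].
  destruct (pt_in n sx sy T (S k) Ht) as [i' [Hi' Hon']].
  assert (i = i').
  { destruct (Nat.eq_dec i i') as [|Hne]; [assumption|].
    exfalso. apply (Hd i i' Hi Hi' Hne). destruct Hon, Hon'. congruence. }
  subst i'.
  assert (HL : length T <> 0%nat) by (destruct Ht as [Hne _]; destruct T; simpl; [congruence|lia]).
  apply (Hnc (k mod length T)%nat i (Nat.mod_upper_bound _ _ HL) Hi).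
  rewrite pt_mod, pt_S_mod. auto.
Qed.

Lemma x_seg n sx sy T k : is_tour n sx sy T ->
  exists i, (i < n)%nat /\ on_seg sx sy i (pt T k) /\ fst (pt T k) = sx i.
Proof.
  intros Ht. destruct (pt_in n sx sy T k Ht) as [i [Hi Hon]].
  exists i. repeat split; auto; apply Hon.
Qed.

Lemma prev_eq (T : list point) k : (1 <= k)%nat -> pt T (k + length T - 1) = pt T (k - 1).
Proof.
  intros. replace (k + length T - 1)%nat with ((k - 1) + length T)%nat by lia.
  apply pt_per.
Qed.

Theorem corollary1 (n : nat) (sx sy : nat -> R) (OPT : list point) :
  distinct_x n sx ->
  min_cost_tour n sx sy OPT ->
  no_consec_same_seg n sx sy OPT ->
  not_self_crossing OPT ->
  forall j d, (j < length OPT)%nat -> (0 < d)%nat -> (d < length OPT)%nat ->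
    refl n sx sy OPT j -> refl n sx sy OPT (j + d) ->
    (forall e, (0 < e)%nat -> (e < d)%nat -> ~ refl n sx sy OPT (j + e)) ->
    (left_refl n sx sy OPT j -> right_refl n sx sy OPT (j + d)) /\
    (right_refl n sx sy OPT j -> left_refl n sx sy OPT (j + d)).
Proof.
  intros Hd [Ht _] Hnc _ j d Hj Hd0 HdL _ Hr Hno.
  set (x := fun k => fst (pt OPT k)).
  assert (HA : forall k, x k <> x (S k)) by (intro k; apply (x_neq n sx sy); auto).
  assert (Hprev : forall k, (1 <= k)%nat -> x (k + length OPT - 1)%nat = x (k - 1)%nat)
    by (intros; unfold x; now rewrite prev_eq).
  split.
  - intros [i [Hi [Hon [H1 [H2 H3]]]]].
    assert (Hs : x (S j) < x j).
    { destruct Hon as [Hx _]. unfold x in *. rewrite Hx in *.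
      specialize (HA j). unfold x in HA. rewrite Hx in HA. lra. }
    assert (Hdec : forall e, (1 <= e <= d)%nat -> x (j + e)%nat < x (j + e - 1)%nat).
    { intros e He. induction e as [|e IH]; [lia|].
      destruct (Nat.eq_dec e 0) as [->|He0].
      { replace (j+1-1)%nat with j by lia. replace (j + 1)%nat with (S j) by lia. exact Hs. }
      specialize (IH ltac:(lia)).
      replace (j + S e - 1)%nat with (j + e)%nat by lia.
      destruct (Rlt_or_le (x (j + S e)%nat) (x (j + e)%nat)) as [Hlt|Hle]; [exact Hlt|].
      exfalso. apply (Hno e ltac:(lia) ltac:(lia)). right.
      destruct (x_seg n sx sy OPT (j + e) Ht) as [i' [Hi' [Hon' Hx']]].
      exists i'. split; [exact Hi'|]. split; [exact Hon'|].
      fold (x (j + e)%nat) in Hx'.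
      change (sx i' <= x (j + e + length OPT - 1)%nat /\ sx i' <= x (j + e)%nat /\
              sx i' <= x (S (j + e))).
      rewrite Hprev by lia. replace (S (j + e)) with (j + S e)%nat by lia. lra. }
    destruct Hr as [[i' [Hi' [Hon' [G1 [G2 G3]]]]]|Hr]; [|exact Hr].
    exfalso. specialize (Hdec d ltac:(lia)).
    change (x (j + d + length OPT - 1)%nat <= sx i') in G1.
    change (x (j + d)%nat <= sx i') in G2.
    rewrite Hprev in G1 by lia. destruct Hon' as [Hx _]. fold (x (j+d)%nat) in Hx. lra.
  - intros [i [Hi [Hon [H1 [H2 H3]]]]].
    assert (Hs : x j < x (S j)).
    { destruct Hon as [Hx _]. unfold x in *. rewrite Hx in *.
      specialize (HA j). unfold x in HA. rewrite Hx in HA. lra. }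
    assert (Hdec : forall e, (1 <= e <= d)%nat -> x (j + e - 1)%nat < x (j + e)%nat).
    { intros e He. induction e as [|e IH]; [lia|].
      destruct (Nat.eq_dec e 0) as [->|He0].
      { replace (j+1-1)%nat with j by lia. replace (j + 1)%nat with (S j) by lia. exact Hs. }
      specialize (IH ltac:(lia)).
      replace (j + S e - 1)%nat with (j + e)%nat by lia.
      destruct (Rlt_or_le (x (j + e)%nat) (x (j + S e)%nat)) as [Hlt|Hle]; [exact Hlt|].
      exfalso. apply (Hno e ltac:(lia) ltac:(lia)). left.
      destruct (x_seg n sx sy OPT (j + e) Ht) as [i' [Hi' [Hon' Hx']]].
      exists i'. split; [exact Hi'|]. split; [exact Hon'|].
      fold (x (j + e)%nat) in Hx'.
      change (x (j + e + length OPT - 1)%nat <= sx i' /\ x (j + e)%nat <= sx i' /\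
              x (S (j + e)) <= sx i').
      rewrite Hprev by lia. replace (S (j + e)) with (j + S e)%nat by lia. lra. }
    destruct Hr as [Hr|[i' [Hi' [Hon' [G1 [G2 G3]]]]]]; [exact Hr|].
    exfalso. specialize (Hdec d ltac:(lia)).
    change (sx i' <= x (j + d + length OPT - 1)%nat) in G1.
    rewrite Hprev in G1 by lia. destruct Hon' as [Hx _]. fold (x (j+d)%nat) in Hx. lra.
Qed.
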